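(* Let $R$ and $S$ be commutative rings with identity, $f:R\to S$ a ring homomorphism, and $J$ a nonzero proper ideal of $S$. Let $\mathfrak{p}$ and $\{\mathfrak{p}_\alpha\}_{\alpha\in\Lambda}$ be prime ideals of $R$, and $\mathfrak{q}$ and $\{\mathfrak{q}_\alpha\}_{\alpha\in\Lambda}$ be prime ideals of $S$ not containing $J$. Then: (1) $\mathfrak{p}^{\prime_f}\subseteq\bigcup_{\alpha\in\Lambda}\mathfrak{p}_\alpha^{\prime_f}$ if and only if $\mathfrak{p}\subseteq\bigcup_{\alpha\in\Lambda}\mathfrak{p}_\alpha$. (2) If $\mathfrak{q}\subseteq\bigcup_{\alpha\in\Lambda}\mathfrak{q}_\alpha$, then $\overline{\mathfrak{q}}^f\subseteq\bigcup_{\alpha\in\Lambda}\overline{\mathfrak{q}_\alpha}^f$. The converse holds if either $f$ is surjective or $\operatorname{Spec}(S)\setminus V(J)$ is compactly packed. (3) $\bigcup_{\alpha\in\Lambda}\mathfrak{p}_\alpha^{\prime_f}\subseteq\mathfrak{p}^{\prime_f}$ if and only if $\bigcup_{\alpha\in\Lambda}\mathfrak{p}_\alpha\subseteq\mathfrak{p}$; and $\bigcup_{\alpha\in\Lambda}\overline{\mathfrak{q}_\alpha}^f\subseteq\overline{\mathfrak{q}}^f$ if and only if $\bigcup_{\alpha\in\Lambda}\mathfrak{q}_\alpha\subseteq\mathfrak{q}$ (with no additional assumptions). (4) $\overline{\mathfrak{q}}^f\subseteq\bigcup_{\alpha\in\Lambda}\mathfrak{p}_\alpha^{\prime_f}$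 if and only if $f^{-1}(\mathfrak{q}+J)\subseteq\bigcup_{\alpha\in\Lambda}\mathfrak{p}_\alpha$. (5) If $\operatorname{Spec}(S)\setminus V(J)$ is compactly packed, then $\mathfrak{p}^{\prime_f}\not\subseteq\bigcup_{\alpha\in\Lambda}\overline{\mathfrak{q}_\alpha}^f$.
   Context: $R\bowtie^f J:=\{(r,f(r)+j)\mid r\in R,\ j\in J\}$, a subring of $R\times S$. For a prime ideal $\mathfrak{p}$ of $R$, $\mathfrak{p}^{\prime_f}:=\{(p,f(p)+j)\mid p\in\mathfrak{p},\ j\in J\}$; for a prime ideal $\mathfrak{q}$ of $S$ with $J\not\subseteq\mathfrak{q}$, $\overline{\mathfrak{q}}^f:=\{(r,f(r)+j)\mid r\in R,\ j\in J,\ f(r)+j\in\mathfrak{q}\}$; both are prime ideals of $R\bowtie^f J$. $V(J)$ is the set of prime ideals of $S$ containing $J$. A subset $X\subseteq\operatorname{Spec}(S)$ is compactly packed if whenever an ideal $I$ of $S$ is contained in the union of a family $\{\mathfrak{q}_i\}_i$ of elements of $X$, then $I\subseteq\mathfrak{q}_i$ for some $i$. *)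

(* Defs.v *)
From HB Require Import structures.
From mathcomp Require Import all_boot all_algebra.
Set Implicit Arguments. Unset Strict Implicit. Unset Printing Implicit Defensive.
Import GRing.Theory.
Local Open Scope ring_scope.

Definition psubset {T : Type} (A B : T -> Prop) : Prop := forall x, A x -> B x.

Definition bigunion {T L : Type} (F : L -> T -> Prop) : T -> Prop :=
  fun x => exists a : L, F a x.

Definition is_ideal {R : comNzRingType} (I : R -> Prop) : Prop :=
  I 0 /\ (forall x y, I x -> I y -> I (x - y)) /\ (forall r x, I x -> I (r * x)).

Definition is_prime_ideal {R : comNzRingType} (P : R -> Prop) : Prop :=
  is_ideal P /\ ~ P 1 /\ (forall a b, P (a * b) -> P a \/ P b).

Definition amalg {R S : comNzRingType} (f : {rmorphism R -> S}) (J : S -> Prop)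
  : R * S -> Prop :=
  fun x => exists r j, J j /\ x = (r, f r + j).

Definition prime_f {R S : comNzRingType} (f : {rmorphism R -> S}) (J : S -> Prop)
  (p : R -> Prop) : R * S -> Prop :=
  fun x => exists a j, p a /\ J j /\ x = (a, f a + j).

Definition bar_f {R S : comNzRingType} (f : {rmorphism R -> S}) (J : S -> Prop)
  (q : S -> Prop) : R * S -> Prop :=
  fun x => exists r j, J j /\ q (f r + j) /\ x = (r, f r + j).

Definition ideal_sum {S : comNzRingType} (A B : S -> Prop) : S -> Prop :=
  fun s => exists a b, A a /\ B b /\ s = a + b.

Definition ppreim {R S : Type} (f : R -> S) (A : S -> Prop) : R -> Prop :=
  fun r => A (f r).

Definition spec_minus_V {S : comNzRingType} (J : S -> Prop) (q : S -> Prop) : Prop :=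
  is_prime_ideal q /\ ~ psubset J q.

Definition compactly_packed {S : comNzRingType} (X : (S -> Prop) -> Prop) : Prop :=
  forall (I : S -> Prop), is_ideal I ->
  forall (L : Type) (qs : L -> S -> Prop), (forall i, X (qs i)) ->
    psubset I (bigunion qs) -> exists i, psubset I (qs i).

Definition fsurjective {R S : Type} (f : R -> S) : Prop := forall s, exists r, f r = s.

(* Main.v *)
Require Import Defs.
From HB Require Import structures.
From mathcomp Require Import all_boot all_algebra.
From Stdlib Require Import Classical.
Import GRing.Theory.
Local Open Scope ring_scope.

Lemma ideal_opp (S : comNzRingType) (I : S -> Prop) x : is_ideal I -> I x -> I (- x).
Proof. move=> [h0 [hB hM]] hx. by have := hB _ _ h0 hx; rewrite add0r. Qed.

Lemma prime_absorb (S : comNzRingType) (P Q J : S -> Prop) :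
  is_prime_ideal P -> is_ideal J -> is_ideal Q -> ~ psubset J P ->
  (forall x, Q x -> J x -> P x) -> psubset Q P.
Proof.
move=> [hP [hP1 hPp]] hJ hQ hJP H x Qx.
have [j [Jj nPj]] : exists j, J j /\ ~ P j.
  apply: NNPP => hn; apply: hJP => y Jy; apply: NNPP => nPy; apply: hn; by exists y.
have : P (j * x).
  apply: H.
  - by case: hQ => _ [_ hM]; apply: hM.
  - by case: hJ => _ [_ hM]; rewrite mulrC; apply: hM.
by case/hPp.
Qed.

Arguments prime_absorb {S P Q J}.

Theorem lemma2p2 (R S : comNzRingType) (f : {rmorphism R -> S}) (J : S -> Prop)
  (hJ : is_ideal J) (hJ0 : exists j, J j /\ j <> 0) (hJ1 : ~ J 1)
  (Lam : Type)
  (p : R -> Prop) (ps : Lam -> R -> Prop)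
  (hp : is_prime_ideal p) (hps : forall a, is_prime_ideal (ps a))
  (q : S -> Prop) (qs : Lam -> S -> Prop)
  (hq : is_prime_ideal q) (hqJ : ~ psubset J q)
  (hqs : forall a, is_prime_ideal (qs a)) (hqsJ : forall a, ~ psubset J (qs a)) :
  (* (1) *)
  (psubset (prime_f f J p) (bigunion (fun a => prime_f f J (ps a)))
     <-> psubset p (bigunion ps)) /\
  (* (2) *)
  (psubset q (bigunion qs) ->
     psubset (bar_f f J q) (bigunion (fun a => bar_f f J (qs a)))) /\
  ((fsurjective f \/ compactly_packed (spec_minus_V J)) ->
     psubset (bar_f f J q) (bigunion (fun a => bar_f f J (qs a))) ->
     psubset q (bigunion qs)) /\
  (* (3) *)
  (psubset (bigunion (fun a => prime_f f J (ps a))) (prime_f f J p)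
     <-> psubset (bigunion ps) p) /\
  (psubset (bigunion (fun a => bar_f f J (qs a))) (bar_f f J q)
     <-> psubset (bigunion qs) q) /\
  (* (4) *)
  (psubset (bar_f f J q) (bigunion (fun a => prime_f f J (ps a)))
     <-> psubset (ppreim f (ideal_sum q J)) (bigunion ps)) /\
  (* (5) *)
  (compactly_packed (spec_minus_V J) ->
     ~ psubset (prime_f f J p) (bigunion (fun a => bar_f f J (qs a)))).
Proof.
have J0 : J 0 by case: hJ.
split; [split|split; [|split; [|split; [split|split; [split|split; [split|]]]]]].
- move=> H a pa.
  have [al [b [j [psb [Jj [-> _]]]]]] : bigunion (fun a => prime_f f J (ps a)) (a, f a + 0).
    by apply: H; exists a, 0.
  by exists al.
- move=> H x [a [j [pa [Jj ->]]]].
  have [al h] := H a pa. by exists al, a, j.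
- move=> H x [r [j [Jj [qx ->]]]].
  have [al h] := H _ qx. by exists al, r, j.
- case=> [hsurj|hcp] H.
  + move=> s qs0. have [r fr] := hsurj s.
    have [al [r' [j' [Jj' [qsa e]]]]] : bigunion (fun a => bar_f f J (qs a)) (r, f r + 0).
      by apply: H; exists r, 0; rewrite addr0 fr.
    case: e => e1 e2. exists al. by rewrite -fr -(addr0 (f r)) e2.
  + move=> s qsx.
    have hI : is_ideal (fun s => q s /\ J s).
      case: hq => [[q0 [qB qM]] _]; case: hJ => _ [jB jM].
      split; first by split.
      split; first by move=> x y [? ?] [? ?]; split; [apply: qB|apply: jB].
      by move=> r x [? ?]; split; [apply: qM|apply: jM].
    have sub : psubset (fun s => q s /\ J s) (bigunion qs).
      move=> t [qt Jt].
      have [al [r' [j' [Jj' [qsa e]]]]] : bigunion (fun a => bar_f f J (qs a)) (0, f 0 + t).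
        by apply: H; exists 0, t; rewrite rmorph0 add0r.
      exists al; move: e qsa => [e1 e2]; subst; by rewrite -e2 rmorph0 add0r.
    have [i hi] := hcp _ hI Lam qs (fun a => conj (hqs a) (hqsJ a)) sub.
    exists i. apply: (prime_absorb (hqs i) hJ (proj1 hq) (hqsJ i) _ s qsx).
    by move=> x qx Jx; apply: hi.
- move=> H a [al psa].
  have [b [j' [pb [Jj' e]]]] : prime_f f J p (a, f a + 0).
    by apply: H; exists al, a, 0.
  by case: e => ->.
- move=> H x [al [a [j [psa [Jj ->]]]]]. exists a, j. split=> //. apply: H. by exists al.
- move=> H x [al qsx].
  apply: (prime_absorb hq hJ (proj1 (hqs al)) hqJ _ x qsx).
  move=> y qsy Jy.
  have [r [j [Jj [qy e]]]] : bar_f f J q (0, f 0 + y).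
    by apply: H; exists al, 0, y; rewrite rmorph0 add0r.
  move: e qy => [e1 e2]; subst; by rewrite -e2 rmorph0 add0r.
- move=> H x [al [r [j [Jj [qsx ->]]]]]. exists r, j. split=> //. split=> //. apply: H. by exists al.
- move=> H r [a [b [qa [Jb e]]]].
  have [al [c [j [psc [Jj [e1 _]]]]]] : bigunion (fun a => prime_f f J (ps a)) (r, f r + - b).
    by apply: H; exists r, (- b); split; [apply: ideal_opp|rewrite e addrK].
  by exists al; rewrite e1.
- move=> H x [r [j [Jj [qx ->]]]].
  have [al h] : bigunion ps r.
    apply: H; exists (f r + j), (- j); split=> //; split; first by apply: ideal_opp.
    by rewrite addrK.
  by exists al, r, j.
- move=> hcp H.
  have sub : psubset J (bigunion qs).
    move=> t Jt.
    have [al [r' [j' [Jj' [qsa e]]]]] : bigunion (fun a => bar_f f J (qs a)) (0, f 0 + t).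
      apply: H; exists 0, t; split; first by case: hp => [[? _] _].
      by [].
    exists al; move: e qsa => [e1 e2]; subst; by rewrite -e2 rmorph0 add0r.
  have [i hi] := hcp _ hJ Lam qs (fun a => conj (hqs a) (hqsJ a)) sub.
  exact: hqsJ i hi.
Qed.
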